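(* Let $r>0$, $V_T>0$ and $R_0\ge r$. Define $$f(t,V_s)=1+\frac{1}{2R_0(R_0+r)}\left(r^2-V_T^2\left(\frac{2\pi R_0}{V_s}+t\right)^2\right)-\cos\!\left(\frac{V_s t}{R_0}\right)$$ and $$V_{s_2}=\frac{\pi R_0V_T(R_0+r)+V_T\sqrt{R_0(R_0+r)\left[\pi^2R_0(R_0+r)+r^2\right]}}{r(R_0+r)}.$$ Then the minimum of $t\mapsto f(t,V_{s_2})$ over $0\le t\le\frac{\pi R_0}{2V_{s_2}}$ is strictly positive, that is, $f(t^*,V_{s_2})>0$ at the minimizer $t^*$. In particular $f(t,V_{s_2})\ge 0$ for all $t\in\left[0,\frac{\pi R_0}{2V_{s_2}}\right]$.
   Context: $R_0$ is the initial radius of the disk containing the evaders, $2r$ is the length of the sweeper's line sensor, $V_T$ is the maximal evader speed, and $V_{s_2}$ is a candidate sweeper speed. The condition $f(t,V_s)\ge 0$ for $0\le t\le\pi R_0/(2V_s)$ is the paper's criterion for the sweeper to be fast enough to accomplish the confinement task. *)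

(* Defs.v *)
From Stdlib Require Import Reals.
Open Scope R_scope.

Definition f_sweep (R0 r VT : R) (t Vs : R) : R :=
  1 + / (2 * R0 * (R0 + r)) * (r ^ 2 - VT ^ 2 * (2 * PI * R0 / Vs + t) ^ 2)
    - cos (Vs * t / R0).

Definition Vs2 (R0 r VT : R) : R :=
  (PI * R0 * VT * (R0 + r)
     + VT * sqrt (R0 * (R0 + r) * (PI ^ 2 * R0 * (R0 + r) + r ^ 2)))
  / (r * (R0 + r)).

(* Main.v *)
From Stdlib Require Import Reals Rtopology Lra Psatz.
Open Scope R_scope.
Check PI2_1.
Lemma cos_lb (u : R) : 0 <= u <= PI/2 -> u^2/3 <= 1 - cos u.
Proof.
  intros [h1 h2].
  assert (hp := PI_4).
  destruct (cos_bound u 0 ltac:(lra) h2) as [_ H].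
  unfold cos_approx, cos_term in H. simpl in H.
  assert (u <= 2) by lra.
  assert (cos u <= 1 - u^2/2 + u^4/24).
  { eapply Rle_trans; [exact H|]. right. field. }
  assert (u^4 <= 4*u^2) by (assert (u^2<=4) by nra; nra).
  nra.
Qed.

Lemma key (r R0 q u P C : R) : 0 < r -> r <= R0 -> 0 < q -> 1 <= P ->
  r*q^2 + 2*P*R0*(R0+r)*q = r*R0*(R0+r) -> 0 <= u <= 2 -> u^2/3 <= C ->
  0 < C + (r^2 - q^2*(2*P+u)^2) / (2*R0*(R0+r)).
Proof.
  intros hr hR hq hP hrel hu hC.
  set (D := 2*R0*(R0+r)).
  assert (hD : 0 < D) by (unfold D; nra).
  assert (h1 : r - 2*P*q = 2*r*q^2/D).
  { apply Rmult_eq_reg_r with D; [|lra].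
    replace (2*r*q^2/D*D) with (2*r*q^2) by (field; lra). unfold D.
    replace ((r - 2*P*q)*(2*R0*(R0+r))) with (2*(r*R0*(R0+r)) - 4*P*R0*(R0+r)*q) by ring.
    rewrite <- hrel. ring. }
  assert (hpos : 0 < 2*r*q^2/D) by (assert (0<q^2) by (apply pow_lt; lra); apply Rdiv_lt_0_compat; nra).
  assert (h2 : r^2 - 4*P^2*q^2 >= 8*P*r*q^3/D).
  { replace (r^2 - 4*P^2*q^2) with ((r - 2*P*q)*(r+2*P*q)) by ring.
    rewrite h1. replace (8*P*r*q^3/D) with ((2*r*q^2/D)*(4*P*q)) by (field; lra).
    apply Rle_ge, Rmult_le_compat_l; lra. }
  set (E := r^2 - 4*P^2*q^2) in *.
  set (A := D/3 - q^2). set (B := 4*P*q^2).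
  assert (hq2 : q <= r/2) by nra.
  assert (hD4 : 4*r^2 <= D) by (unfold D; nra).
  assert (hqD : q^2/D <= 1/12).
  { apply Rmult_le_reg_r with D; [lra|]. replace (q^2/D*D) with (q^2) by (field; lra). nra. }
  assert (hA : 0 < A) by (unfold A; nra).
  assert (hE' : 8*P*r*q^3/D = 8*P*r*q*(q^2/D)) by (field; lra).
  assert (hdisc : B^2 < 4*A*E).
  { assert (4*A*E >= 4*A*(8*P*r*q*(q^2/D))) by nra.
    assert (A*(q^2/D) = q^2/3 - q^2*(q^2/D)) by (unfold A; field; lra).
    assert (0 < P*q^3) by (apply Rmult_lt_0_compat; [lra| apply pow_lt; lra]).
    assert (r > 2*P*q) by lra.
    set (z := q^2/D) in *.
    assert (hz : 2*r*(1/3 - z) > P*q) by nra.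
    assert (4*A*(8*P*r*q*z) = 16*(P*q^3)*(2*r*(1/3-z))) .
    { transitivity (32*P*r*q*(A*z)). ring. rewrite H0. field. }
    assert (16*(P*q^3)*(2*r*(1/3-z)) > 16*(P*q^3)*(P*q)) by (apply Rmult_gt_compat_l; lra).
    unfold B. replace ((4*P*q^2)^2) with (16*(P*q^3)*(P*q)) by ring. lra. }
  assert (hg : 0 < A*u^2 - B*u + E).
  { assert (e : 4*A*(A*u^2 - B*u + E) = (2*A*u - B)^2 + (4*A*E - B^2)) by ring.
    assert (0 <= (2*A*u - B)^2) by apply pow2_ge_0.
    assert (0 < 4*A*(A*u^2 - B*u + E)) by lra.
    destruct (Rle_or_lt (A*u^2 - B*u + E) 0) as [h|h]; [|exact h].
    assert (4*A*(A*u^2 - B*u + E) <= 0) by (assert (0 < 4*A) by lra; nra). lra. }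
  assert (hC' : D*C >= D*(u^2/3)) by nra.
  apply Rmult_lt_reg_r with D; [lra|]. rewrite Rmult_0_l, Rmult_plus_distr_r.
  replace ((r^2 - q^2*(2*P+u)^2) / D * D) with (r^2 - q^2*(2*P+u)^2) by (field; lra).
  unfold A, B, E in *. nra.
Qed.

Require Import Defs.

Lemma pos_all (r VT R0 : R) (hr : 0 < r) (hVT : 0 < VT) (hR0 : r <= R0) :
  0 < Vs2 R0 r VT /\
  forall t : R, 0 <= t <= PI * R0 / (2 * Vs2 R0 r VT) ->
     0 < f_sweep R0 r VT t (Vs2 R0 r VT).
Proof.
  set (S := sqrt (R0 * (R0 + r) * (PI ^ 2 * R0 * (R0 + r) + r ^ 2))).
  assert (hPI := PI2_1). assert (hPI4 := PI_4).
  assert (hS0 : 0 <= S) by apply sqrt_pos.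
  assert (hS2 : S * S = R0 * (R0 + r) * (PI ^ 2 * R0 * (R0 + r) + r ^ 2)).
  { apply sqrt_sqrt. assert (0 < R0 * (R0+r)) by nra. assert (0 < PI ^ 2 * R0 * (R0 + r) + r ^ 2) by nra. nra. }
  set (X := PI*R0*(R0+r)+S).
  assert (hX : 0 < X) by (unfold X; assert (0 < R0*(R0+r)) by nra; assert (0 < PI*(R0*(R0+r))) by (apply Rmult_lt_0_compat; lra); nra).
  assert (hV : Vs2 R0 r VT = VT * X / (r*(R0+r))) by (unfold Vs2, X; fold S; field; nra).
  set (V := Vs2 R0 r VT) in *.
  assert (hVp : 0 < V) by (rewrite hV; apply Rdiv_lt_0_compat; nra).
  split; [exact hVp|].
  set (q := R0*VT/V).
  assert (hq : q = R0*r*(R0+r)/X) by (unfold q; rewrite hV; field; nra).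
  assert (hqp : 0 < q) by (rewrite hq; apply Rdiv_lt_0_compat; [repeat apply Rmult_lt_0_compat|]; lra).
  assert (hrel : r*q^2 + 2*PI*R0*(R0+r)*q = r*R0*(R0+r)).
  { rewrite hq. apply Rmult_eq_reg_r with (X^2); [|nra].
    replace ((r * (R0 * r * (R0 + r) / X) ^ 2 + 2 * PI * R0 * (R0 + r) * (R0 * r * (R0 + r) / X)) * X ^ 2)
      with (R0*r*(R0+r) * (r*(R0*r*(R0+r)) + 2*PI*R0*(R0+r)*X)) by (field; lra).
    replace (r*R0*(R0+r)*X^2) with (R0*r*(R0+r)*X^2) by ring.
    apply Rmult_eq_compat_l. unfold X. nra. }
  intros t ht.
  set (u := V*t/R0).
  assert (hu : 0 <= u <= PI/2).
  { unfold u. split. unfold Rdiv; apply Rmult_le_pos; [nra| left; apply Rinv_0_lt_compat; lra].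
    apply Rmult_le_reg_r with (R0/V). apply Rdiv_lt_0_compat; lra.
    replace (V*t/R0*(R0/V)) with t by (field; lra).
    replace (PI/2*(R0/V)) with (PI * R0 / (2 * V)) by (field; lra). lra. }
  assert (hC := cos_lb u hu).
  assert (hk := key r R0 q u PI (1 - cos u) hr hR0 hqp ltac:(lra) hrel ltac:(lra) hC).
  replace (f_sweep R0 r VT t V) with (1 - cos u + (r ^ 2 - q ^ 2 * (2 * PI + u) ^ 2) / (2 * R0 * (R0 + r))).
  exact hk.
  unfold f_sweep. fold u. unfold q, u. field. lra.
Qed.

Theorem theorem11 (r VT R0 : R) (hr : 0 < r) (hVT : 0 < VT) (hR0 : r <= R0) :
  (exists tstar : R,
      0 <= tstar <= PI * R0 / (2 * Vs2 R0 r VT) /\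
      (forall t : R, 0 <= t <= PI * R0 / (2 * Vs2 R0 r VT) ->
         f_sweep R0 r VT tstar (Vs2 R0 r VT) <= f_sweep R0 r VT t (Vs2 R0 r VT)) /\
      0 < f_sweep R0 r VT tstar (Vs2 R0 r VT)) /\
  (forall t : R, 0 <= t <= PI * R0 / (2 * Vs2 R0 r VT) ->
     0 <= f_sweep R0 r VT t (Vs2 R0 r VT)).
Proof.
  destruct (pos_all r VT R0 hr hVT hR0) as [hV hpos].
  assert (hPI := PI_RGT_0).
  assert (hb : 0 <= PI * R0 / (2 * Vs2 R0 r VT)).
  { unfold Rdiv; apply Rmult_le_pos; [nra| left; apply Rinv_0_lt_compat; lra]. }
  split.
  - destruct (continuity_ab_min (fun t => f_sweep R0 r VT t (Vs2 R0 r VT)) 0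
       (PI * R0 / (2 * Vs2 R0 r VT)) hb) as [m [hm1 hm2]].
    + intros c _. unfold f_sweep. reg.
    + exists m. split; [exact hm2|]. split; [exact hm1|]. apply hpos; exact hm2.
  - intros t ht. left. apply hpos; exact ht.
Qed.
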